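(* (Cut elimination and subformula property.) Every sequent derivable in D.BL (resp. D.CBL) has a derivation in D.BL (resp. D.CBL) that does not use the Cut rule, and D.BL and D.CBL have the subformula property: every formula occurring in a cut-free derivation is a subformula of a formula occurring in its end-sequent.
   Context: Calculus D.BL. Two types $1,2$; type-$i$ atoms $p_i,q_i,\dots$. Type-1 formulas: $A_1::=p_1\mid 1_1\mid 0_1\mid \mathrm{p}A_2\mid A_1\sqcap_1A_1\mid A_1\sqcup_1A_1$; type-2 formulas: $A_2::=p_2\mid 1_2\mid 0_2\mid \mathrm{n}A_1\mid A_2\sqcap_2A_2\mid A_2\sqcup_2A_2$ (subformulas are taken across types, e.g. $A_2$ is a subformula of $\mathrm{p}A_2$). Type-1 structures: $X_1::=A_1\mid \hat1_1\mid\check0_1\mid \mathrm{P}X_2\mid X_1\hat\sqcap_1X_1\mid X_1\check\sqcup_1X_1\mid X_1\check\sqsupset_1X_1\mid X_1\hat\sqsubset_1X_1$; type-2 structures analogously with index 2 and $\mathrm{N}X_1$ instead of $\mathrm{P}X_2$. Sequents $X_i\vdash Y_i$ have both sides of the same type. Rules (for $i\in\{1,2\}$; ''$\Leftrightarrow$'' = both directions): Display: $X\hat\sqcap_iY\vdash Z\Leftrightarrow X\vdash Y\check\sqsupset_iZ$; $X\vdash Y\check\sqcup_iZ\Leftrightarrow X\hat\sqsubset_iY\vdash Z$; $\mathrm{P}X_2\vdash Y_1\Leftrightarrow X_2\vdash \mathrm{N}Y_1$; $\mathrm{N}X_1\vdash Y_2\Leftrightarrow X_1\vdash\mathrm{P}Y_2$.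 Identity $p_i\vdash p_i$; Cut: from $X\vdash A$ and $A\vdash Y$ infer $X\vdash Y$. Structural: from $X\hat\sqcap_i\hat1_i\vdash Y$ infer $X\vdash Y$; from $X\vdash Y\check\sqcup_i\check0_i$ infer $X\vdash Y$; exchange (from $X\hat\sqcap_iY\vdash Z$ infer $Y\hat\sqcap_iX\vdash Z$; from $X\vdash Y\check\sqcup_iZ$ infer $X\vdash Z\check\sqcup_iY$); associativity (from $(X\hat\sqcap_iY)\hat\sqcap_iZ\vdash W$ infer $X\hat\sqcap_i(Y\hat\sqcap_iZ)\vdash W$; from $X\vdash(Y\check\sqcup_iZ)\check\sqcup_iW$ infer $X\vdash Y\check\sqcup_i(Z\check\sqcup_iW)$); weakening (from $X\vdash Z$ infer $X\hat\sqcap_iY\vdash Z$; from $X\vdash Y$ infer $X\vdash Y\check\sqcup_iZ$); contraction (from $X\hat\sqcap_iX\vdash Z$ infer $X\vdash Z$; from $X\vdash Y\check\sqcup_iY$ infer $X\vdash Y$). Operational: from $\hat1_i\vdash X$ infer $1_i\vdash X$; axiom $\hat1_i\vdash1_i$; axiom $0_i\vdash\check0_i$; from $X\vdash\check0_i$ infer $X\vdash0_i$; from $A\hat\sqcap_iB\vdash X$ infer $A\sqcap_iB\vdash X$; from $X\vdash A$ and $Y\vdash B$ infer $X\hat\sqcap_iY\vdash A\sqcap_iB$; from $A\vdash X$ and $B\vdash Y$ infer $A\sqcup_iB\vdash X\check\sqcup_iY$; from $X\vdash A\check\sqcup_iB$ infer $X\vdash A\sqcup_iB$. Multi-type structural: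 $X_1\vdash Y_1\Leftrightarrow\mathrm{N}X_1\vdash\mathrm{N}Y_1$; $X_2\vdash Y_2\Leftrightarrow\mathrm{P}X_2\vdash\mathrm{P}Y_2$; from $\check0_1\vdash X_1$ infer $\mathrm{P}\check0_2\vdash X_1$; from $X_1\vdash\hat1_1$ infer $X_1\vdash\mathrm{P}\hat1_2$. Multi-type operational: from $\mathrm{N}A_1\vdash X_2$ infer $\mathrm{n}A_1\vdash X_2$; from $X_2\vdash\mathrm{N}A_1$ infer $X_2\vdash\mathrm{n}A_1$; from $\mathrm{P}A_2\vdash X_1$ infer $\mathrm{p}A_2\vdash X_1$; from $X_1\vdash\mathrm{P}A_2$ infer $X_1\vdash\mathrm{p}A_2$. D.CBL adds formulas ${\sim}_iA_i$, structures $\ast_iX_i$, and rules: $\ast_iX\vdash Y\Leftrightarrow\ast_iY\vdash X$; $X\vdash\ast_iY\Leftrightarrow Y\vdash\ast_iX$; $X\vdash Y\Leftrightarrow\ast_iY\vdash\ast_iX$; from $\mathrm{N}\ast_1X_1\vdash Y_2$ infer $\ast_2\mathrm{N}X_1\vdash Y_2$; from $X_2\vdash\mathrm{N}\ast_1Y_1$ infer $X_2\vdash\ast_2\mathrm{N}Y_1$; from $\ast_iA\vdash Y$ infer ${\sim}_iA\vdash Y$; from $X\vdash\ast_iA$ infer $X\vdash{\sim}_iA$. A formula is regarded as a structure; derivations are finite trees of rule applications with axioms at the leaves. *)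

(* Defs.v *)
From Stdlib Require Import List.
Import ListNotations.

Inductive typ : Type := T1 | T2.

(* Formulas of the language, parameterized by c : bool.
   c = false : language of D.BL;  c = true : language of D.CBL
   (the negation ~_i is only available when c = true). *)
Inductive fm (c : bool) : typ -> Type :=
| atom (t : typ) (n : nat) : fm c t
| one (t : typ) : fm c t
| zero (t : typ) : fm c t
| pf : fm c T2 -> fm c T1
| nf : fm c T1 -> fm c T2
| meet (t : typ) : fm c t -> fm c t -> fm c t
| join (t : typ) : fm c t -> fm c t -> fm c t
| neg (t : typ) : c = true -> fm c t -> fm c t.

Arguments atom {c} t n.
Arguments one {c} t.
Arguments zero {c} t.
Arguments pf {c} _.
Arguments nf {c} _.
Arguments meet {c t} _ _.
Arguments join {c t} _ _.
Arguments neg {c t} _ _.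

Inductive st (c : bool) : typ -> Type :=
| F (t : typ) : fm c t -> st c t
| hone (t : typ) : st c t
| czero (t : typ) : st c t
| SP : st c T2 -> st c T1
| SN : st c T1 -> st c T2
| hmeet (t : typ) : st c t -> st c t -> st c t
| cjoin (t : typ) : st c t -> st c t -> st c t
| cimp (t : typ) : st c t -> st c t -> st c t
| hsub (t : typ) : st c t -> st c t -> st c t
| star (t : typ) : c = true -> st c t -> st c t.

Arguments F {c t} _.
Arguments hone {c} t.
Arguments czero {c} t.
Arguments SP {c} _.
Arguments SN {c} _.
Arguments hmeet {c t} _ _.
Arguments cjoin {c t} _ _.
Arguments cimp {c t} _ _.
Arguments hsub {c t} _ _.
Arguments star {c t} _ _.

Record seqt (c : bool) : Type := Sq { sty : typ; lhs : st c sty; rhs : st c sty }.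
Arguments Sq {c sty} _ _.
Arguments sty {c} _.
Arguments lhs {c} _.
Arguments rhs {c} _.

Inductive rule (c : bool) : list (seqt c) -> seqt c -> Type :=
| r_disp1 t (X Y Z : st c t) : rule c [Sq (hmeet X Y) Z] (Sq X (cimp Y Z))
| r_disp1' t (X Y Z : st c t) : rule c [Sq X (cimp Y Z)] (Sq (hmeet X Y) Z)
| r_disp2 t (X Y Z : st c t) : rule c [Sq X (cjoin Y Z)] (Sq (hsub X Y) Z)
| r_disp2' t (X Y Z : st c t) : rule c [Sq (hsub X Y) Z] (Sq X (cjoin Y Z))
| r_dispPN (X : st c T2) (Y : st c T1) : rule c [Sq (SP X) Y] (Sq X (SN Y))
| r_dispPN' (X : st c T2) (Y : st c T1) : rule c [Sq X (SN Y)] (Sq (SP X) Y)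
| r_dispNP (X : st c T1) (Y : st c T2) : rule c [Sq (SN X) Y] (Sq X (SP Y))
| r_dispNP' (X : st c T1) (Y : st c T2) : rule c [Sq X (SP Y)] (Sq (SN X) Y)
| r_id t n : rule c [] (Sq (F (atom t n)) (F (atom t n)))
| r_cut t (X Y : st c t) (A : fm c t) : rule c [Sq X (F A); Sq (F A) Y] (Sq X Y)
| r_unitL t (X Y : st c t) : rule c [Sq (hmeet X (hone t)) Y] (Sq X Y)
| r_unitR t (X Y : st c t) : rule c [Sq X (cjoin Y (czero t))] (Sq X Y)
| r_exL t (X Y Z : st c t) : rule c [Sq (hmeet X Y) Z] (Sq (hmeet Y X) Z)
| r_exR t (X Y Z : st c t) : rule c [Sq X (cjoin Y Z)] (Sq X (cjoin Z Y))
| r_assocL t (X Y Z W : st c t) :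
    rule c [Sq (hmeet (hmeet X Y) Z) W] (Sq (hmeet X (hmeet Y Z)) W)
| r_assocR t (X Y Z W : st c t) :
    rule c [Sq X (cjoin (cjoin Y Z) W)] (Sq X (cjoin Y (cjoin Z W)))
| r_weakL t (X Y Z : st c t) : rule c [Sq X Z] (Sq (hmeet X Y) Z)
| r_weakR t (X Y Z : st c t) : rule c [Sq X Y] (Sq X (cjoin Y Z))
| r_contrL t (X Z : st c t) : rule c [Sq (hmeet X X) Z] (Sq X Z)
| r_contrR t (X Y : st c t) : rule c [Sq X (cjoin Y Y)] (Sq X Y)
| r_oneL t (X : st c t) : rule c [Sq (hone t) X] (Sq (F (one t)) X)
| r_oneR t : rule c [] (Sq (hone t) (F (one t)))
| r_zeroL t : rule c [] (Sq (F (zero t)) (czero t))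
| r_zeroR t (X : st c t) : rule c [Sq X (czero t)] (Sq X (F (zero t)))
| r_meetL t (A B : fm c t) (X : st c t) :
    rule c [Sq (hmeet (F A) (F B)) X] (Sq (F (meet A B)) X)
| r_meetR t (X Y : st c t) (A B : fm c t) :
    rule c [Sq X (F A); Sq Y (F B)] (Sq (hmeet X Y) (F (meet A B)))
| r_joinL t (A B : fm c t) (X Y : st c t) :
    rule c [Sq (F A) X; Sq (F B) Y] (Sq (F (join A B)) (cjoin X Y))
| r_joinR t (X : st c t) (A B : fm c t) :
    rule c [Sq X (cjoin (F A) (F B))] (Sq X (F (join A B)))
| r_NN (X Y : st c T1) : rule c [Sq X Y] (Sq (SN X) (SN Y))
| r_NN' (X Y : st c T1) : rule c [Sq (SN X) (SN Y)] (Sq X Y)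
| r_PP (X Y : st c T2) : rule c [Sq X Y] (Sq (SP X) (SP Y))
| r_PP' (X Y : st c T2) : rule c [Sq (SP X) (SP Y)] (Sq X Y)
| r_zeroP (X : st c T1) : rule c [Sq (czero T1) X] (Sq (SP (czero T2)) X)
| r_oneP (X : st c T1) : rule c [Sq X (hone T1)] (Sq X (SP (hone T2)))
| r_nL (A : fm c T1) (X : st c T2) : rule c [Sq (SN (F A)) X] (Sq (F (nf A)) X)
| r_nR (X : st c T2) (A : fm c T1) : rule c [Sq X (SN (F A))] (Sq X (F (nf A)))
| r_pL (A : fm c T2) (X : st c T1) : rule c [Sq (SP (F A)) X] (Sq (F (pf A)) X)
| r_pR (X : st c T1) (A : fm c T2) : rule c [Sq X (SP (F A))] (Sq X (F (pf A)))
| r_sw1 (h : c = true) t (X Y : st c t) : rule c [Sq (star h X) Y] (Sq (star h Y) X)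
| r_sw2 (h : c = true) t (X Y : st c t) : rule c [Sq X (star h Y)] (Sq Y (star h X))
| r_contra (h : c = true) t (X Y : st c t) : rule c [Sq X Y] (Sq (star h Y) (star h X))
| r_contra' (h : c = true) t (X Y : st c t) : rule c [Sq (star h Y) (star h X)] (Sq X Y)
| r_NstarL (h : c = true) (X : st c T1) (Y : st c T2) :
    rule c [Sq (SN (star h X)) Y] (Sq (star h (SN X)) Y)
| r_NstarR (h : c = true) (X : st c T2) (Y : st c T1) :
    rule c [Sq X (SN (star h Y))] (Sq X (star h (SN Y)))
| r_negL (h : c = true) t (A : fm c t) (Y : st c t) :
    rule c [Sq (star h (F A)) Y] (Sq (F (neg h A)) Y)
| r_negR (h : c = true) t (X : st c t) (A : fm c t) :
    rule c [Sq X (star h (F A))] (Sq X (F (neg h A))).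

Inductive der (c : bool) : seqt c -> Type :=
| dnode (ps : list (seqt c)) (s : seqt c) : rule c ps s -> ders c ps -> der c s
with ders (c : bool) : list (seqt c) -> Type :=
| dnil : ders c []
| dcons (s : seqt c) (ps : list (seqt c)) : der c s -> ders c ps -> ders c (s :: ps).

Arguments dnode {c ps s} _ _.
Arguments dnil {c}.
Arguments dcons {c s ps} _ _.

Definition is_cut {c ps s} (r : rule c ps s) : Prop :=
  match r return Prop with r_cut _ _ _ _ _ => True | _ => False end.

Fixpoint cut_free {c s} (d : der c s) : Prop :=
  match d with dnode r ds => ~ is_cut r /\ cut_free_l ds end
with cut_free_l {c ps} (ds : ders c ps) : Prop :=
  match ds with dnil => True | dcons d ds' => cut_free d /\ cut_free_l ds' end.

Definition afm (c : bool) : Type := { t : typ & fm c t }.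

Fixpoint fms_st {c t} (X : st c t) : list (afm c) :=
  match X with
  | F A => [existT _ _ A]
  | hone _ => []
  | czero _ => []
  | SP Y => fms_st Y
  | SN Y => fms_st Y
  | hmeet Y Z => fms_st Y ++ fms_st Z
  | cjoin Y Z => fms_st Y ++ fms_st Z
  | cimp Y Z => fms_st Y ++ fms_st Z
  | hsub Y Z => fms_st Y ++ fms_st Z
  | star _ Y => fms_st Y
  end.

Definition seq_fms {c} (s : seqt c) : list (afm c) := fms_st (lhs s) ++ fms_st (rhs s).

Fixpoint occurs {c s} (A : afm c) (d : der c s) : Prop :=
  In A (seq_fms s) \/ match d with dnode _ ds => occurs_l A ds end
with occurs_l {c ps} (A : afm c) (ds : ders c ps) : Prop :=
  match ds with dnil => False | dcons d ds' => occurs A d \/ occurs_l A ds' end.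

Inductive subfm (c : bool) : afm c -> afm c -> Prop :=
| sf_refl A : subfm c A A
| sf_pf A (B : fm c T2) : subfm c A (existT _ T2 B) -> subfm c A (existT _ T1 (pf B))
| sf_nf A (B : fm c T1) : subfm c A (existT _ T1 B) -> subfm c A (existT _ T2 (nf B))
| sf_meetl A t (B C : fm c t) : subfm c A (existT _ t B) -> subfm c A (existT _ t (meet B C))
| sf_meetr A t (B C : fm c t) : subfm c A (existT _ t C) -> subfm c A (existT _ t (meet B C))
| sf_joinl A t (B C : fm c t) : subfm c A (existT _ t B) -> subfm c A (existT _ t (join B C))
| sf_joinr A t (B C : fm c t) : subfm c A (existT _ t C) -> subfm c A (existT _ t (join B C))
| sf_neg A t (h : c = true) (B : fm c t) :
    subfm c A (existT _ t B) -> subfm c A (existT _ t (neg h B)).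

(* Main.v *)
Require Import Defs.
From Stdlib Require Import List Program.Equality Eqdep_dec.
Import ListNotations.

Section S.
Variable c : bool.

Inductive cfd : seqt c -> Prop :=
| c_disp1 t (X Y Z : st c t) : cfd (Sq (hmeet X Y) Z) -> cfd (Sq X (cimp Y Z))
| c_disp1' t (X Y Z : st c t) : cfd (Sq X (cimp Y Z)) -> cfd (Sq (hmeet X Y) Z)
| c_disp2 t (X Y Z : st c t) : cfd (Sq X (cjoin Y Z)) -> cfd (Sq (hsub X Y) Z)
| c_disp2' t (X Y Z : st c t) : cfd (Sq (hsub X Y) Z) -> cfd (Sq X (cjoin Y Z))
| c_dispPN (X : st c T2) (Y : st c T1) : cfd (Sq (SP X) Y) -> cfd (Sq X (SN Y))
| c_dispPN' (X : st c T2) (Y : st c T1) : cfd (Sq X (SN Y)) -> cfd (Sq (SP X) Y)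
| c_dispNP (X : st c T1) (Y : st c T2) : cfd (Sq (SN X) Y) -> cfd (Sq X (SP Y))
| c_dispNP' (X : st c T1) (Y : st c T2) : cfd (Sq X (SP Y)) -> cfd (Sq (SN X) Y)
| c_id t n : cfd (Sq (F (atom t n)) (F (atom t n)))
| c_unitL t (X Y : st c t) : cfd (Sq (hmeet X (hone t)) Y) -> cfd (Sq X Y)
| c_unitR t (X Y : st c t) : cfd (Sq X (cjoin Y (czero t))) -> cfd (Sq X Y)
| c_exL t (X Y Z : st c t) : cfd (Sq (hmeet X Y) Z) -> cfd (Sq (hmeet Y X) Z)
| c_exR t (X Y Z : st c t) : cfd (Sq X (cjoin Y Z)) -> cfd (Sq X (cjoin Z Y))
| c_assocL t (X Y Z W : st c t) :
    cfd (Sq (hmeet (hmeet X Y) Z) W) -> cfd (Sq (hmeet X (hmeet Y Z)) W)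
| c_assocR t (X Y Z W : st c t) :
    cfd (Sq X (cjoin (cjoin Y Z) W)) -> cfd (Sq X (cjoin Y (cjoin Z W)))
| c_weakL t (X Y Z : st c t) : cfd (Sq X Z) -> cfd (Sq (hmeet X Y) Z)
| c_weakR t (X Y Z : st c t) : cfd (Sq X Y) -> cfd (Sq X (cjoin Y Z))
| c_contrL t (X Z : st c t) : cfd (Sq (hmeet X X) Z) -> cfd (Sq X Z)
| c_contrR t (X Y : st c t) : cfd (Sq X (cjoin Y Y)) -> cfd (Sq X Y)
| c_oneL t (X : st c t) : cfd (Sq (hone t) X) -> cfd (Sq (F (one t)) X)
| c_oneR t : cfd (Sq (hone t) (F (one t)))
| c_zeroL t : cfd (Sq (F (zero t)) (czero t))
| c_zeroR t (X : st c t) : cfd (Sq X (czero t)) -> cfd (Sq X (F (zero t)))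
| c_meetL t (A B : fm c t) (X : st c t) :
    cfd (Sq (hmeet (F A) (F B)) X) -> cfd (Sq (F (meet A B)) X)
| c_meetR t (X Y : st c t) (A B : fm c t) :
    cfd (Sq X (F A)) -> cfd (Sq Y (F B)) -> cfd (Sq (hmeet X Y) (F (meet A B)))
| c_joinL t (A B : fm c t) (X Y : st c t) :
    cfd (Sq (F A) X) -> cfd (Sq (F B) Y) -> cfd (Sq (F (join A B)) (cjoin X Y))
| c_joinR t (X : st c t) (A B : fm c t) :
    cfd (Sq X (cjoin (F A) (F B))) -> cfd (Sq X (F (join A B)))
| c_NN (X Y : st c T1) : cfd (Sq X Y) -> cfd (Sq (SN X) (SN Y))
| c_NN' (X Y : st c T1) : cfd (Sq (SN X) (SN Y)) -> cfd (Sq X Y)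
| c_PP (X Y : st c T2) : cfd (Sq X Y) -> cfd (Sq (SP X) (SP Y))
| c_PP' (X Y : st c T2) : cfd (Sq (SP X) (SP Y)) -> cfd (Sq X Y)
| c_zeroP (X : st c T1) : cfd (Sq (czero T1) X) -> cfd (Sq (SP (czero T2)) X)
| c_oneP (X : st c T1) : cfd (Sq X (hone T1)) -> cfd (Sq X (SP (hone T2)))
| c_nL (A : fm c T1) (X : st c T2) : cfd (Sq (SN (F A)) X) -> cfd (Sq (F (nf A)) X)
| c_nR (X : st c T2) (A : fm c T1) : cfd (Sq X (SN (F A))) -> cfd (Sq X (F (nf A)))
| c_pL (A : fm c T2) (X : st c T1) : cfd (Sq (SP (F A)) X) -> cfd (Sq (F (pf A)) X)
| c_pR (X : st c T1) (A : fm c T2) : cfd (Sq X (SP (F A))) -> cfd (Sq X (F (pf A)))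
| c_sw1 (h : c = true) t (X Y : st c t) : cfd (Sq (star h X) Y) -> cfd (Sq (star h Y) X)
| c_sw2 (h : c = true) t (X Y : st c t) : cfd (Sq X (star h Y)) -> cfd (Sq Y (star h X))
| c_contra (h : c = true) t (X Y : st c t) : cfd (Sq X Y) -> cfd (Sq (star h Y) (star h X))
| c_contra' (h : c = true) t (X Y : st c t) : cfd (Sq (star h Y) (star h X)) -> cfd (Sq X Y)
| c_NstarL (h : c = true) (X : st c T1) (Y : st c T2) :
    cfd (Sq (SN (star h X)) Y) -> cfd (Sq (star h (SN X)) Y)
| c_NstarR (h : c = true) (X : st c T2) (Y : st c T1) :
    cfd (Sq X (SN (star h Y))) -> cfd (Sq X (star h (SN Y)))
| c_negL (h : c = true) t (A : fm c t) (Y : st c t) :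
    cfd (Sq (star h (F A)) Y) -> cfd (Sq (F (neg h A)) Y)
| c_negR (h : c = true) t (X : st c t) (A : fm c t) :
    cfd (Sq X (star h (F A))) -> cfd (Sq X (F (neg h A))).

Lemma mk0 s (r : rule c [] s) : ~ is_cut r -> exists d : der c s, cut_free d.
Proof. intros H. exists (dnode r dnil). simpl. tauto. Qed.
Lemma mk1 p s (r : rule c [p] s) : ~ is_cut r -> (exists d : der c p, cut_free d) -> exists d : der c s, cut_free d.
Proof. intros H [d Hd]. exists (dnode r (dcons d dnil)). simpl. tauto. Qed.
Lemma mk2 p q s (r : rule c [p;q] s) : ~ is_cut r -> (exists d : der c p, cut_free d) -> (exists d : der c q, cut_free d) -> exists d : der c s, cut_free d.
Proof. intros H [d Hd] [e He]. exists (dnode r (dcons d (dcons e dnil))). simpl. tauto. Qed.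

Lemma cfd_der s : cfd s -> exists d : der c s, cut_free d.
Proof.
  induction 1;
  repeat match goal with H : exists _ : der c _, _ |- _ => destruct H end;
  first [ unshelve eapply mk0; [econstructor | simpl; tauto]
        | match goal with d : der c ?p |- _ =>
            unshelve eapply (mk1 p); [econstructor | simpl; tauto | eexists; eassumption] end
        | match goal with d : der c ?p, e : der c ?q |- _ =>
            unshelve eapply (mk2 p q); [econstructor | simpl; tauto | eexists; eassumption | eexists; eassumption] end ].
Qed.

Inductive ctx (h : typ) : typ -> Type :=
| Hole : ctx h h
| CF t : fm c t -> ctx h t
| Chone t : ctx h t
| Cczero t : ctx h t
| CSP : ctx h T2 -> ctx h T1
| CSN : ctx h T1 -> ctx h T2
| Chmeet t : ctx h t -> ctx h t -> ctx h t
| Ccjoin t : ctx h t -> ctx h t -> ctx h t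
| Ccimp t : ctx h t -> ctx h t -> ctx h t
| Chsub t : ctx h t -> ctx h t -> ctx h t
| Cstar t : c = true -> ctx h t -> ctx h t.
Arguments Hole {h}.
Arguments CF {h t} _.
Arguments Chone {h} t.
Arguments Cczero {h} t.
Arguments CSP {h} _.
Arguments CSN {h} _.
Arguments Chmeet {h t} _ _.
Arguments Ccjoin {h t} _ _.
Arguments Ccimp {h t} _ _.
Arguments Chsub {h t} _ _.
Arguments Cstar {h t} _ _.

Fixpoint plug {h t} (K : ctx h t) (Z : st c h) : st c t :=
  match K in ctx _ t return st c t with
  | Hole => Z
  | CF A => F A
  | Chone t => hone t
  | Cczero t => czero t
  | CSP K => SP (plug K Z)
  | CSN K => SN (plug K Z)
  | Chmeet K1 K2 => hmeet (plug K1 Z) (plug K2 Z)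
  | Ccjoin K1 K2 => cjoin (plug K1 Z) (plug K2 Z)
  | Ccimp K1 K2 => cimp (plug K1 Z) (plug K2 Z)
  | Chsub K1 K2 => hsub (plug K1 Z) (plug K2 Z)
  | Cstar e K => star e (plug K Z)
  end.

Fixpoint hok {h t} (b pol : bool) (K : ctx h t) : Prop :=
  match K with
  | Hole => pol = b
  | CF _ | Chone _ | Cczero _ => True
  | CSP K | CSN K => hok b pol K
  | Chmeet K1 K2 | Ccjoin K1 K2 => hok b pol K1 /\ hok b pol K2
  | Ccimp K1 K2 => hok b (negb pol) K1 /\ hok b pol K2
  | Chsub K1 K2 => hok b pol K1 /\ hok b (negb pol) K2
  | Cstar _ K => hok b (negb pol) K
  end.

Fixpoint embed {h t} (X : st c t) : ctx h t :=
  match X with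
  | F A => CF A
  | hone t => Chone t
  | czero t => Cczero t
  | SP X => CSP (embed X)
  | SN X => CSN (embed X)
  | hmeet X Y => Chmeet (embed X) (embed Y)
  | cjoin X Y => Ccjoin (embed X) (embed Y)
  | cimp X Y => Ccimp (embed X) (embed Y)
  | hsub X Y => Chsub (embed X) (embed Y)
  | star e X => Cstar e (embed X)
  end.

Lemma plug_embed h t (X : st c t) (Z : st c h) : plug (embed X) Z = X.
Proof. induction X; simpl; congruence. Qed.
Lemma hok_embed h t (X : st c t) b pol : hok b pol (@embed h t X).
Proof. revert pol; induction X; simpl; auto. Qed.

Definition Lprem {t} (A : fm c t) : st c t -> Prop :=
  match A in fm _ t return st c t -> Prop with
  | atom t n => fun W => W = F (atom t n)
  | one t => fun W => cfd (Sq (hone t) W)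
  | zero t => fun W => W = czero t
  | pf B => fun W => cfd (Sq (SP (F B)) W)
  | nf B => fun W => cfd (Sq (SN (F B)) W)
  | meet B C => fun W => cfd (Sq (hmeet (F B) (F C)) W)
  | join B C => fun W => exists W1 W2, W = cjoin W1 W2 /\ cfd (Sq (F B) W1) /\ cfd (Sq (F C) W2)
  | neg e B => fun W => cfd (Sq (star e (F B)) W)
  end.

Definition Rprem {t} (A : fm c t) : st c t -> Prop :=
  match A in fm _ t return st c t -> Prop with
  | atom t n => fun U => U = F (atom t n)
  | one t => fun U => U = hone t
  | zero t => fun U => cfd (Sq U (czero t))
  | pf B => fun U => cfd (Sq U (SP (F B)))
  | nf B => fun U => cfd (Sq U (SN (F B)))
  | meet B C => fun U => exists U1 U2, U = hmeet U1 U2 /\ cfd (Sq U1 (F B)) /\ cfd (Sq U2 (F C))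
  | join B C => fun U => cfd (Sq U (cjoin (F B) (F C)))
  | neg e B => fun U => cfd (Sq U (star e (F B)))
  end.

Ltac inj H := injection H; clear H; intros;
  repeat match goal with E : existT _ _ _ = existT _ _ _ |- _ =>
    apply Eqdep_dec.inj_pair2_eq_dec in E; [|decide equality] end.

Definition goalP h (A : fm c h) (Z : st c h) (b : bool) (s : seqt c) : Prop :=
  forall KL KR : ctx h (sty s), lhs s = plug KL (F A) -> rhs s = plug KR (F A) ->
    hok b false KL -> hok b true KR -> cfd (Sq (plug KL Z) (plug KR Z)).

Ltac reify h Z S := lazymatch S with
 | plug ?K Z => K
 | Z => constr:(@Hole h)
 | F ?B => constr:(@CF h _ B)
 | hone ?t => constr:(@Chone h t)
 | czero ?t => constr:(@Cczero h t)
 | SP ?X => let k := reify h Z X in constr:(@CSP h k)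
 | SN ?X => let k := reify h Z X in constr:(@CSN h k)
 | hmeet ?X ?Y => let k1 := reify h Z X in let k2 := reify h Z Y in constr:(Chmeet k1 k2)
 | cjoin ?X ?Y => let k1 := reify h Z X in let k2 := reify h Z Y in constr:(Ccjoin k1 k2)
 | cimp ?X ?Y => let k1 := reify h Z X in let k2 := reify h Z Y in constr:(Ccimp k1 k2)
 | hsub ?X ?Y => let k1 := reify h Z X in let k2 := reify h Z Y in constr:(Chsub k1 k2)
 | star ?e ?X => let k := reify h Z X in constr:(Cstar e k)
 | _ => constr:(@embed h _ S)
 end.

Ltac hokt := simpl in *; repeat match goal with H : _ /\ _ |- _ => destruct H end;
  repeat split; auto using hok_embed.

Ltac solve_prem Z := let h := match type of Z with st _ ?h => h end in lazymatch goal with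
 | |- cfd (Sq ?L ?R) =>
   let kl := reify h Z L in let kr := reify h Z R in
   match goal with IH : goalP _ _ _ _ _ |- _ =>
     apply (IH kl kr); [reflexivity | reflexivity | hokt | hokt] end
 end.

Ltac inv_all A := repeat match goal with
 | H : ?P = plug ?K (F A) |- _ => is_var P; subst P
 | H : _ = plug ?K (F A) |- _ => is_var K; dependent destruction K; simpl in H; try discriminate; try inj H
 | H : ?P = ?v |- _ => is_var v; subst v
 | H : ?v = ?P |- _ => is_var v; subst v
 end.

Ltac param Z :=
 first [ solve [eapply c_disp1; solve_prem Z]
   | solve [eapply c_disp1'; solve_prem Z]
   | solve [eapply c_disp2; solve_prem Z]
   | solve [eapply c_disp2'; solve_prem Z]
   | solve [eapply c_dispPN; solve_prem Z]
   | solve [eapply c_dispPN'; solve_prem Z]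
   | solve [eapply c_dispNP; solve_prem Z]
   | solve [eapply c_dispNP'; solve_prem Z]
   | solve [eapply c_id]
   | solve [eapply c_unitL; solve_prem Z]
   | solve [eapply c_unitR; solve_prem Z]
   | solve [eapply c_exL; solve_prem Z]
   | solve [eapply c_exR; solve_prem Z]
   | solve [eapply c_assocL; solve_prem Z]
   | solve [eapply c_assocR; solve_prem Z]
   | solve [eapply c_weakL; solve_prem Z]
   | solve [eapply c_weakR; solve_prem Z]
   | solve [eapply c_contrL; solve_prem Z]
   | solve [eapply c_contrR; solve_prem Z]
   | solve [eapply c_oneL; solve_prem Z]
   | solve [eapply c_oneR]
   | solve [eapply c_zeroL]
   | solve [eapply c_zeroR; solve_prem Z]
   | solve [eapply c_meetL; solve_prem Z]
   | solve [eapply c_meetR; solve_prem Z]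
   | solve [eapply c_joinL; solve_prem Z]
   | solve [eapply c_joinR; solve_prem Z]
   | solve [eapply c_NN; solve_prem Z]
   | solve [eapply c_NN'; solve_prem Z]
   | solve [eapply c_PP; solve_prem Z]
   | solve [eapply c_PP'; solve_prem Z]
   | solve [eapply c_zeroP; solve_prem Z]
   | solve [eapply c_oneP; solve_prem Z]
   | solve [eapply c_nL; solve_prem Z]
   | solve [eapply c_nR; solve_prem Z]
   | solve [eapply c_pL; solve_prem Z]
   | solve [eapply c_pR; solve_prem Z]
   | solve [eapply c_sw1; solve_prem Z]
   | solve [eapply c_sw2; solve_prem Z]
   | solve [eapply c_contra; solve_prem Z]
   | solve [eapply c_contra'; solve_prem Z]
   | solve [eapply c_NstarL; solve_prem Z]
   | solve [eapply c_NstarR; solve_prem Z]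
   | solve [eapply c_negL; solve_prem Z]
   | solve [eapply c_negR; solve_prem Z] ].

Lemma trace h (A : fm c h) (Z : st c h) (b : bool)
  (Hb : if b then (forall U, Rprem A U -> cfd (Sq U Z)) else (forall W, Lprem A W -> cfd (Sq Z W))) :
  forall s, cfd s -> goalP h A Z b s.
Proof.
  induction 1; unfold goalP; simpl; intros KL KR HL HR PL PR; inv_all A;
  repeat match goal with e1 : c = true, e2 : c = true |- _ =>
    assert (e2 = e1) by apply UIP_dec, Bool.bool_dec; subst e2 end;
  simpl;
  first [ param Z
        | try destruct b; simpl in PL, PR; try discriminate; apply Hb; simpl;
          first [ reflexivity | solve_prem Z
                | eexists _, _; split; [reflexivity | split; solve_prem Z] ] ].
Qed.

Lemma cut_from_comb t (A : fm c t) :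
  (forall U W, Rprem A U -> Lprem A W -> cfd (Sq U W)) ->
  forall X Y, cfd (Sq X (F A)) -> cfd (Sq (F A) Y) -> cfd (Sq X Y).
Proof.
  intros comb X Y HX HY.
  assert (HR : forall U, Rprem A U -> cfd (Sq U Y)).
  { intros U HU.
    pose proof (trace t A U false (fun W HW => comb U W HU HW) _ HY Hole (embed Y)) as T.
    simpl in T. repeat rewrite plug_embed in T. apply T; simpl; auto using hok_embed.
    }
  pose proof (trace t A Y true HR _ HX (embed X) Hole) as T.
  simpl in T. repeat rewrite plug_embed in T. apply T; simpl; auto using hok_embed.

Qed.

Lemma cut_adm t (A : fm c t) : forall X Y, cfd (Sq X (F A)) -> cfd (Sq (F A) Y) -> cfd (Sq X Y).
Proof.
  induction A; apply cut_from_comb; simpl; intros U W HU HW.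
  - subst; apply c_id.
  - subst; exact HW.
  - subst; exact HU.
  - apply c_NN'. apply IHA; [apply c_dispNP'; exact HU | apply c_dispPN; exact HW].
  - apply c_PP'. apply IHA; [apply c_dispPN'; exact HU | apply c_dispNP; exact HW].
  - destruct HU as (U1 & U2 & -> & H1 & H2).
    apply c_exL, c_disp1'. apply IHA2; [exact H2|].
    apply c_disp1, c_exL, c_disp1'. apply IHA1; [exact H1|].
    apply c_disp1; exact HW.
  - destruct HW as (W1 & W2 & -> & H1 & H2).
    apply c_exR, c_disp2'. apply IHA1; [|exact H1].
    apply c_disp2, c_exR, c_disp2'. apply IHA2; [|exact H2].
    apply c_disp2; exact HU.
  - eapply c_contra'. apply IHA; [apply c_sw1; exact HW | apply c_sw2; exact HU].
Qed.

Lemma rule_cfd ps s (r : rule c ps s) : Forall cfd ps -> cfd s.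
Proof.
  destruct r; intros HF;
  repeat match goal with H : Forall _ (_ :: _) |- _ => inversion_clear H end;
  first [ eapply cut_adm; eassumption
        | econstructor; eassumption ].
Qed.

Scheme der_ind' := Induction for der Sort Prop
  with ders_ind' := Induction for ders Sort Prop.

Lemma der_cfd s (d : der c s) : cfd s.
Proof.
  revert s d; apply (der_ind' c (fun s _ => cfd s) (fun ps _ => Forall cfd ps)); intros.
  - eapply rule_cfd; eassumption.
  - constructor.
  - constructor; assumption.
Qed.

Lemma subfm_trans (A B C : afm c) : subfm c A B -> subfm c B C -> subfm c A C.
Proof. intros H1 H2; revert H1; induction H2; intros H1.
all: try (econstructor; eauto; fail).
all: exact H1.
Qed.

Ltac search L := match L with
 | ?a :: ?L' => first [ exists a; split; [simpl; repeat rewrite in_app_iff; simpl; intuition | solve [repeat econstructor] ] | search L' ]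
 | ?l1 ++ ?l2 => first [ search l1 | search l2 ]
 end.

Lemma rule_sub ps s (r : rule c ps s) : ~ is_cut r -> forall p, In p ps ->
  forall B', In B' (seq_fms p) -> exists B, In B (seq_fms s) /\ subfm c B' B.
Proof.
  destruct r; intros Hc p Hp B' HB; simpl in Hc, Hp; try (exfalso; apply Hc; exact I);
  repeat match goal with H : _ \/ _ |- _ => destruct H | H : False |- _ => destruct H end; subst;
  unfold seq_fms in *; cbn [fms_st lhs rhs] in *; repeat rewrite in_app_iff in HB; simpl in HB;
  repeat match goal with H : _ \/ _ |- _ => destruct H | H : False |- _ => destruct H end; subst;
  first [ match goal with H : In B' _ |- _ =>
            exists B'; split; [repeat rewrite in_app_iff; simpl; tauto | apply sf_refl] end
        | match goal with |- exists B, In B ?L /\ _ => search L end ].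
Qed.

Lemma sub_der s (d : der c s) : cut_free d -> forall A, occurs A d ->
  exists B, In B (seq_fms s) /\ subfm c A B.
Proof.
  revert s d.
  apply (der_ind' c
    (fun s d => cut_free d -> forall A, occurs A d -> exists B, In B (seq_fms s) /\ subfm c A B)
    (fun ps ds => cut_free_l ds -> forall A, occurs_l A ds ->
       exists p, In p ps /\ exists B, In B (seq_fms p) /\ subfm c A B)).
  - intros ps s r ds IH [Hc Hcl] A [HA | HA].
    + exists A; split; [exact HA | apply sf_refl].
    + destruct (IH Hcl A HA) as (p & Hp & B' & HB' & HsB').
      destruct (rule_sub ps s r Hc p Hp B' HB') as (B & HB & HsB).
      exists B; split; [exact HB | eapply subfm_trans; eassumption].
  - simpl; intros _ A [].
  - intros s0 ps d IHd ds IHds [Hd Hds] A [HA | HA].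
    + exists s0; split; [left; reflexivity | apply IHd; assumption].
    + destruct (IHds Hds A HA) as (p & Hp & HB).
      exists p; split; [right; exact Hp | exact HB].
Qed.
End S.

Theorem mainTheorem4 (c : bool) :
  (forall s : seqt c, der c s -> exists d : der c s, cut_free d) /\
  (forall (s : seqt c) (d : der c s), cut_free d ->
     forall A : afm c, occurs A d ->
       exists B : afm c, In B (seq_fms s) /\ subfm c A B).
Proof.
  split.
  - intros s d. apply cfd_der. apply der_cfd. exact d.
  - intros s d Hd A HA. eapply sub_der; eassumption.
Qed.
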